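(* Let $(K,v)$ be an extremal valued field with value group $\Gamma$. Then $\Gamma$ is divisible or a $\mathbb{Z}$-group.
   Context: $(K,v)$ with valuation ring $\mathcal{O}_v$ and value group $\Gamma$ (and $v(0)=\infty$) is extremal if for every $n\ge1$ and every $F\in K[X_1,\dots,X_n]$ the set $\{v(F(a_1,\dots,a_n)) : a_i\in\mathcal{O}_v\}\subseteq\Gamma\cup\{\infty\}$ has a maximal element. An ordered abelian group is regular if for every $n\ge1$ every open interval containing at least $n$ elements contains an $n$-divisible element; a $\mathbb{Z}$-group is a regular ordered abelian group with a smallest positive element. *)

(* Defs.v *)
From HB Require Import structures.
From mathcomp Require Import all_boot all_order all_algebra.
Set Implicit Arguments. Unset Strict Implicit. Unset Printing Implicit Defensive.
Import Order.TTheory GRing.Theory Num.Theory.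
Local Open Scope ring_scope.

Definition ordered_abelian_group (G : porderZmodType) : Prop :=
  (forall x y : G, x <= y \/ y <= x) /\
  (forall x y z : G, x <= y -> x + z <= y + z).

(* Gamma ∪ {∞}, encoded as option G with None = ∞ (the top element). *)
Definition ole (G : porderZmodType) (a b : option G) : Prop :=
  match b with
  | None => True
  | Some y => match a with None => False | Some x => x <= y end
  end.

Definition oadd (G : porderZmodType) (a b : option G) : option G :=
  match a, b with Some x, Some y => Some (x + y) | _, _ => None end.

Definition is_valuation (K : fieldType) (G : porderZmodType)
    (v : K -> option G) : Prop :=
  (forall x, v x = None <-> x = 0) /\
  (forall x y, v (x * y) = oadd (v x) (v y)) /\
  (forall x y, ole (v x) (v (x + y)) \/ ole (v y) (v (x + y))) /\
  (forall g : G, exists x, v x = Some g).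

Definition in_val_ring (K : fieldType) (G : porderZmodType)
    (v : K -> option G) (x : K) : Prop := ole (Some 0) (v x).

(* Polynomials in K[X_1,...,X_n], as finite lists of terms
   (coefficient, exponent vector); every polynomial is of this form. *)
Definition mpoly (K : fieldType) (n : nat) := seq (K * n.-tuple nat).

Definition meval (K : fieldType) (n : nat) (F : mpoly K n) (a : 'I_n -> K) : K :=
  \sum_(m <- F) m.1 * \prod_(i < n) a i ^+ tnth m.2 i.

Definition extremal (K : fieldType) (G : porderZmodType)
    (v : K -> option G) : Prop :=
  forall (n : nat), (0 < n)%N -> forall F : mpoly K n,
    exists a : 'I_n -> K, (forall i, in_val_ring v (a i)) /\
      forall b : 'I_n -> K, (forall i, in_val_ring v (b i)) ->
        ole (v (meval F b)) (v (meval F a)).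

Definition n_divisible (G : porderZmodType) (n : nat) (x : G) : Prop :=
  exists y : G, x = y *+ n.

Definition divisible_group (G : porderZmodType) : Prop :=
  forall n : nat, (0 < n)%N -> forall x : G, n_divisible n x.

Definition regular_group (G : porderZmodType) : Prop :=
  forall n : nat, (0 < n)%N -> forall a b : G,
    (exists s : seq G, uniq s /\ size s = n /\ forall x, x \in s -> a < x < b) ->
    exists x : G, a < x < b /\ n_divisible n x.

Definition Z_group (G : porderZmodType) : Prop :=
  regular_group G /\
  exists e : G, 0 < e /\ forall x : G, 0 < x -> e <= x.

(* Main.v *)
From HB Require Import structures.
From mathcomp Require Import all_boot all_order all_algebra.
Require Import Defs.
From Stdlib Require Import Classical.
Set Implicit Arguments. Unset Strict Implicit. Unset Printing Implicit Defensive.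
Import Order.TTheory GRing.Theory Num.Theory.
Local Open Scope ring_scope.


Lemma g_addl (G : porderZmodType) (hG : ordered_abelian_group G) (x y z : G) :
  x <= y -> z + x <= z + y.
Proof. by move=> h; rewrite ![z + _]addrC; apply hG.2. Qed.

Lemma g_addr (G : porderZmodType) (hG : ordered_abelian_group G) (x y z : G) :
  x <= y -> x + z <= y + z.
Proof. exact: hG.2. Qed.

Lemma g_leD (G : porderZmodType) (hG : ordered_abelian_group G) (a b c d : G) :
  a <= b -> c <= d -> a + c <= b + d.
Proof. move=> h1 h2; apply: le_trans (g_addr hG _ h1) (g_addl hG _ h2). Qed.

Lemma g_ltr (G : porderZmodType) (hG : ordered_abelian_group G) (x y z : G) :
  x < y -> x + z < y + z.
Proof.
rewrite !lt_def => /andP[ne le]; apply/andP; split; last exact: g_addr.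
by apply: contra ne => /eqP/addIr ->.
Qed.

Lemma g_ltl (G : porderZmodType) (hG : ordered_abelian_group G) (x y z : G) :
  x < y -> z + x < z + y.
Proof. by move=> h; rewrite ![z + _]addrC; apply g_ltr. Qed.

Lemma g_subge0 (G : porderZmodType) (hG : ordered_abelian_group G) (x y : G) :
  (0 <= y - x) <-> (x <= y).
Proof.
split=> h.
  by have := g_addr hG x h; rewrite add0r subrK.
by have := g_addr hG (- x) h; rewrite subrr.
Qed.

Lemma g_subgt0 (G : porderZmodType) (hG : ordered_abelian_group G) (x y : G) :
  (0 < y - x) <-> (x < y).
Proof.
split=> h.
  by have := g_ltr hG x h; rewrite add0r subrK.
by have := g_ltr hG (- x) h; rewrite subrr.
Qed.

Lemma g_oppge (G : porderZmodType) (hG : ordered_abelian_group G) (x y : G) :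
  x <= y -> - y <= - x.
Proof.
move=> h; have := g_addr hG (- x - y) h.
by rewrite addrA subrr add0r [y + _]addrC subrK.
Qed.

Lemma g_opplt (G : porderZmodType) (hG : ordered_abelian_group G) (x y : G) :
  x < y -> - y < - x.
Proof.
move=> h; have := g_ltr hG (- x - y) h.
by rewrite addrA subrr add0r [y + _]addrC subrK.
Qed.

Lemma g_nle (G : porderZmodType) (hG : ordered_abelian_group G) (x y : G) :
  ~ (x <= y) -> y < x.
Proof.
move=> h; rewrite lt_def; case: (hG.1 x y) => // ->; rewrite andbT.
by apply/eqP=> e; apply: h; rewrite e.
Qed.

Lemma g_lt_total (G : porderZmodType) (hG : ordered_abelian_group G) (x y : G) :
  x < y \/ x = y \/ y < x.
Proof.
case: (hG.1 x y) => h.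
  case: (eqVneq x y) => [->|ne]; first by right; left.
  by left; rewrite lt_def eq_sym ne h.
case: (eqVneq x y) => [->|ne]; first by right; left.
by right; right; rewrite lt_def ne h.
Qed.

Lemma g_mulrn_ge0 (G : porderZmodType) (hG : ordered_abelian_group G) (x : G) k :
  0 <= x -> 0 <= x *+ k.
Proof.
move=> h; elim: k => [|k IH]; first by rewrite mulr0n.
by rewrite mulrS -[0]add0r; apply: g_leD.
Qed.

Lemma g_mulrn_gt0 (G : porderZmodType) (hG : ordered_abelian_group G) (x : G) k :
  0 < x -> (0 < k)%N -> 0 < x *+ k.
Proof.
move=> h; case: k => // k _; rewrite mulrS -[0]addr0.
apply: lt_le_trans (g_ltr hG _ h) _; apply: g_addl => //.
exact: g_mulrn_ge0 (ltW h).
Qed.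

Lemma g_mulrn_le (G : porderZmodType) (hG : ordered_abelian_group G) (x y : G) k :
  x <= y -> x *+ k <= y *+ k.
Proof.
move=> h; elim: k => [|k IH]; first by rewrite !mulr0n.
by rewrite !mulrS; apply: g_leD.
Qed.

Definition maxmult (G : porderZmodType) (n : nat) :=
  forall th : G, 0 <= th -> exists a1, 0 <= a1 /\ a1 *+ n <= th /\
    forall a, 0 <= a -> a *+ n <= th -> a *+ n <= a1 *+ n.

Lemma g_half (G : porderZmodType) (hG : ordered_abelian_group G)
  (nol : forall e : G, 0 < e -> exists x, 0 < x /\ x < e) (eps : G) :
  0 < eps -> exists d, 0 < d /\ d + d <= eps.
Proof.
move=> he; have [x [x0 xe]] := nol _ he.
case: (hG.1 (x + x) eps) => h; first by exists x.
exists (eps - x); split; first by apply/(g_subgt0 hG).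
have : eps - x + (eps - x) <= eps - x + x.
  apply: g_addl => //.
  by have := g_addr hG (- x) h; rewrite addrK.
by rewrite subrK.
Qed.

Lemma g_small (G : porderZmodType) (hG : ordered_abelian_group G)
  (nol : forall e : G, 0 < e -> exists x, 0 < x /\ x < e) k :
  forall eps : G, 0 < eps -> exists d, 0 < d /\ d <= eps /\ d *+ k <= eps.
Proof.
elim: k => [|k IH] eps he.
  by exists eps; rewrite mulr0n; split=> //; split=> //; exact: ltW.
have [d [d0 dd]] := g_half hG nol he.
have [f [f0 [fd fk]]] := IH _ d0.
have dle : d <= eps.
  apply: le_trans dd; rewrite -{1}[d]addr0; apply: g_addl => //; exact: ltW.
exists f; split=> //; split; first exact: le_trans fd dle.
by rewrite mulrS; apply: le_trans dd; apply: g_leD.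
Qed.

Lemma least_pos (G : porderZmodType) (hG : ordered_abelian_group G) n g :
  (0 < n)%N -> ~ @n_divisible G n g -> maxmult G n ->
  exists e : G, 0 < e /\ forall x, 0 < x -> e <= x.
Proof.
move=> n0 ng mm.
have [g' [g'0 ng']] : exists g' : G, 0 < g' /\ ~ n_divisible n g'.
  case: (g_lt_total hG g 0) => [glt|[ge|ggt]].
  - exists (- g); split; first by have := g_opplt hG glt; rewrite oppr0.
    by move=> [y ey]; apply: ng; exists (- y); rewrite mulNrn -ey opprK.
  - by exfalso; apply: ng; exists 0; rewrite ge mul0rn.
  - by exists g.
apply: NNPP => nole.
have nol : forall e : G, 0 < e -> exists x, 0 < x /\ x < e.
  move=> e e0; apply: NNPP => hn; apply: nole; exists e; split=> // x x0.
  apply: NNPP => hx; apply: hn; exists x; split=> //; exact: g_nle.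
have [a1 [a10 [a1le amax]]] := mm _ (ltW g'0).
have ne : a1 *+ n != g'.
  by apply/eqP => e; apply: ng'; exists a1.
have epos : 0 < g' - a1 *+ n.
  by apply/(g_subgt0 hG); rewrite lt_def eq_sym ne a1le.
have [d [d0 [_ dk]]] := g_small hG nol n epos.
have h1 : 0 <= a1 + d.
  by rewrite -[0]addr0; apply: g_leD => //; exact: ltW.
have h2 : (a1 + d) *+ n <= g'.
  rewrite mulrnDl; have := g_addl hG (a1 *+ n) dk.
  by rewrite subrKC.
have := amax _ h1 h2; rewrite mulrnDl.
have dn0 := g_mulrn_gt0 hG d0 n0.
have := g_ltl hG (a1 *+ n) dn0; rewrite addr0 => lt1 le1.
by have := lt_le_trans lt1 le1; rewrite ltxx.
Qed.

Lemma lemB (G : porderZmodType) (hG : ordered_abelian_group G) n (e : G) :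
  0 < e -> (0 < n)%N -> maxmult G n ->
  forall th : G, exists a, a *+ n <= th /\ th < a *+ n + e *+ n.
Proof.
move=> e0 n0 mm th.
have [b hb] : exists b : G, 0 <= th + b *+ n.
  case: (hG.1 0 th) => h.
    by exists 0; rewrite mul0rn addr0.
  exists (- th); rewrite mulNrn; apply/(g_subge0 hG).
  case: n n0 {mm} => // k _; rewrite mulrS -{3}[th]addr0; apply: g_addl => //.
  by rewrite -(mul0rn _ k); apply: g_mulrn_le.
have [a1 [a10 [a1le amax]]] := mm _ hb.
exists (a1 - b); rewrite mulrnBl; split.
  by have := g_addr hG (- (b *+ n)) a1le; rewrite addrK.
apply: (g_nle hG) => h.
have h1 : 0 <= a1 + e by rewrite -[0]addr0; apply: g_leD => //; exact: ltW.
have h2 : (a1 + e) *+ n <= th + b *+ n.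
  have := g_addr hG (b *+ n) h.
  by rewrite mulrnDl addrAC subrK.
have := amax _ h1 h2; rewrite mulrnDl.
have := g_ltl hG (a1 *+ n) (g_mulrn_gt0 hG e0 n0); rewrite addr0 => lt1 le1.
by have := lt_le_trans lt1 le1; rewrite ltxx.
Qed.

Lemma disc_between (G : porderZmodType) (hG : ordered_abelian_group G) (e : G) :
  (forall x, 0 < x -> e <= x) -> forall (a x : G) k,
  a < x -> x < a + e *+ k -> exists j, (0 < j < k)%N /\ x = a + e *+ j.
Proof.
move=> emin a x; elim=> [|k IH] ax xk.
  by move: xk; rewrite mulr0n addr0 => xa; have := lt_trans ax xa; rewrite ltxx.
case: (g_lt_total hG x (a + e *+ k)) => [hlt|[heq|hgt]].
- by have [j [jk ->]] := IH ax hlt; exists j; split=> //; case/andP: jk => -> /= /ltnW; rewrite ltnS.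
- case: k IH xk heq => [|k] _ xk heq.
    by move: ax; rewrite heq mulr0n addr0 ltxx.
  exists k.+1; split; [by rewrite /= ltnSn | exact: heq].
- exfalso.
  have : e <= x - (a + e *+ k) by apply: emin; apply/(g_subgt0 hG); exact: hgt.
  move=> /(g_addr hG (a + e *+ k)); rewrite subrK => h.
  move: xk; rewrite mulrS addrCA => xk.
  by have := le_lt_trans h xk; rewrite ltxx.
Qed.

Lemma count_big (G : porderZmodType) (hG : ordered_abelian_group G) (e : G) :
  (forall x, 0 < x -> e <= x) -> forall (a : G) (s : seq G) m,
  (0 < m)%N -> uniq s -> size s = m -> (forall x, x \in s -> a < x) ->
  exists2 x, x \in s & a + e *+ m <= x.
Proof.
move=> emin a s m m0 us sz hs; apply: NNPP => hn.
have sub : {subset s <= [seq a + e *+ j | j <- iota 1 m.-1]}.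
  move=> x xs.
  have xlt : x < a + e *+ m.
    apply: (g_nle hG) => h; apply: hn; by exists x.
  have [j [jm ->]] := disc_between hG emin (hs _ xs) xlt.
  apply: map_f; rewrite mem_iota; case/andP: jm => -> jm /=.
  by rewrite add1n prednK.
have := uniq_leq_size us sub; rewrite size_map size_iota sz.
by case: m m0 {sz hn sub} => // k _; rewrite ltnn.
Qed.

Lemma grp_main (G : porderZmodType) (hG : ordered_abelian_group G) :
  (forall n, (0 < n)%N -> (forall g : G, n_divisible n g) \/ maxmult G n) ->
  divisible_group G \/ Z_group G.
Proof.
move=> H.
case: (classic (divisible_group G)) => hd; first by left.
right.
have [n [n0 [g ng]]] : exists n, (0 < n)%N /\ exists g : G, ~ n_divisible n g.
  apply: NNPP => hn; apply: hd => n n0 x; apply: NNPP => hx; apply: hn.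
  by exists n; split=> //; exists x.
have mm : maxmult G n by case: (H n n0) => // hall; exfalso; apply: ng; apply: hall.
have [e [e0 emin]] := least_pos hG n0 ng mm.
split; last by exists e.
move=> m m0 a b [s [us [sz hs]]].
case: (H m m0) => [hall|mm'].
  case: s us sz hs => [|x s] us sz hs; first by rewrite -sz in m0.
  by exists x; split; [apply: hs; rewrite inE eqxx | apply: hall].
have [x xs xge] := count_big hG emin m0 us sz (fun x xs => (andP (hs x xs)).1).
have [c [c1 c2]] := lemB hG e0 m0 mm' (a + e *+ m).
exists (c *+ m); split; last by exists c.
apply/andP; split.
  by have := g_ltr hG (- (e *+ m)) c2; rewrite !addrK.
apply: le_lt_trans c1 (le_lt_trans xge _).
exact: (andP (hs x xs)).2.
Qed.

Definition tadd n (t1 t2 : n.-tuple nat) : n.-tuple nat :=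
  [tuple (tnth t1 i + tnth t2 i)%N | i < n].
Definition mmul (K : fieldType) n (F H : mpoly K n) : mpoly K n :=
  [seq (p.1 * q.1, tadd p.2 q.2) | p <- F, q <- H].
Definition mconst (K : fieldType) n (c : K) : mpoly K n :=
  [:: (c, [tuple 0%N | i < n])].
Definition mvar (K : fieldType) n (i : 'I_n) : mpoly K n :=
  [:: (1, [tuple nat_of_bool (j == i) | j < n])].
Definition mpow (K : fieldType) n (F : mpoly K n) k : mpoly K n :=
  iter k (mmul F) (mconst n 1).

Lemma meval_cat (K : fieldType) n (F H : mpoly K n) a :
  meval (F ++ H) a = meval F a + meval H a.
Proof. by rewrite /meval big_cat. Qed.

Lemma meval_mul (K : fieldType) n (F H : mpoly K n) a :
  meval (mmul F H) a = meval F a * meval H a.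
Proof.
rewrite /meval /mmul big_allpairs_dep mulr_suml; apply: eq_bigr => p _.
rewrite mulr_sumr; apply: eq_bigr => q _ /=.
rewrite (eq_bigr (fun i => a i ^+ tnth p.2 i * a i ^+ tnth q.2 i)); last first.
  by move=> i _; rewrite tnth_mktuple exprD.
by rewrite big_split /= mulrACA.
Qed.

Lemma meval_const (K : fieldType) n (c : K) a : meval (mconst n c) a = c.
Proof.
rewrite /meval big_cons big_nil addr0 /= big1 ?mulr1 // => i _.
by rewrite tnth_mktuple expr0.
Qed.

Lemma meval_var (K : fieldType) n (i : 'I_n) a : meval (mvar K i) a = a i.
Proof.
rewrite /meval big_cons big_nil addr0 /= mul1r (bigD1 i) //= tnth_mktuple eqxx expr1.
by rewrite big1 ?mulr1 // => j ji; rewrite tnth_mktuple (negbTE ji) expr0.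
Qed.

Lemma meval_pow (K : fieldType) n (F : mpoly K n) k a :
  meval (mpow F k) a = meval F a ^+ k.
Proof.
elim: k => [|k IH]; first by rewrite /mpow /= meval_const expr0.
by rewrite /mpow iterS -/(mpow F k) meval_mul IH exprS.
Qed.

Definition vg (K : fieldType) (G : porderZmodType) (v : K -> option G) (x : K) : G :=
  if v x is Some g then g else 0.

Lemma v0 (K : fieldType) (G : porderZmodType) (v : K -> option G) :
  is_valuation v -> v 0 = None.
Proof. by move=> hv; apply/(hv.1 0). Qed.

Lemma vSome (K : fieldType) (G : porderZmodType) (v : K -> option G) x :
  is_valuation v -> x != 0 -> v x = Some (vg v x).
Proof.
move=> hv nx; rewrite /vg; case e: (v x) => [g|] //.
by move/(hv.1 x): e => ex; rewrite ex eqxx in nx.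
Qed.

Lemma vgM (K : fieldType) (G : porderZmodType) (v : K -> option G) x y :
  is_valuation v -> x != 0 -> y != 0 -> vg v (x * y) = vg v x + vg v y.
Proof.
move=> hv nx ny; rewrite {1}/vg hv.2.1 (vSome hv nx) (vSome hv ny) //.
Qed.

Lemma vg1 (K : fieldType) (G : porderZmodType) (v : K -> option G) :
  is_valuation v -> vg v 1 = 0.
Proof.
move=> hv; have := vgM hv (oner_neq0 K) (oner_neq0 K); rewrite mulr1 => h.
by have := congr1 (fun z => z - vg v 1) h; rewrite subrr addrK.
Qed.

Lemma vgV (K : fieldType) (G : porderZmodType) (v : K -> option G) x :
  is_valuation v -> x != 0 -> vg v x^-1 = - vg v x.
Proof.
move=> hv nx; have := vgM hv nx (invr_neq0 nx); rewrite mulfV // vg1 // => h.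
by rewrite -[RHS]addr0 h addKr.
Qed.

Lemma vgX (K : fieldType) (G : porderZmodType) (v : K -> option G) x k :
  is_valuation v -> x != 0 -> vg v (x ^+ k) = vg v x *+ k.
Proof.
move=> hv nx; elim: k => [|k IH]; first by rewrite expr0 mulr0n vg1.
by rewrite exprS vgM ?expf_neq0 // IH mulrS.
Qed.

Lemma vgN (K : fieldType) (G : porderZmodType) (v : K -> option G) x :
  ordered_abelian_group G -> is_valuation v -> vg v (- x) = vg v x.
Proof.
move=> hG hv.
have n1 : (-1 : K) != 0 by rewrite oppr_eq0 oner_neq0.
have h : vg v (-1 : K) + vg v (-1 : K) = 0.
  by rewrite -vgM // mulrNN mulr1 vg1.
have e1 : vg v (-1 : K) = 0.
  set g := vg v (-1 : K) in h *.
  case: (hG.1 0 g) => hg; apply/le_anti/andP; split=> //.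
  - by have := g_addl hG g hg; rewrite addr0 h.
  - by have := g_addl hG g hg; rewrite addr0 h.
case: (eqVneq x 0) => [->|nx]; first by rewrite oppr0.
by rewrite -mulN1r vgM // e1 add0r.
Qed.

Lemma vg_ultra (K : fieldType) (G : porderZmodType) (v : K -> option G) x y :
  is_valuation v -> x != 0 -> y != 0 -> x + y != 0 ->
  vg v x <= vg v (x + y) \/ vg v y <= vg v (x + y).
Proof.
move=> hv nx ny nxy; case: (hv.2.2.1 x y) => h; [left|right]; move: h;
by rewrite ?(vSome hv nx) ?(vSome hv ny) (vSome hv nxy).
Qed.

Lemma vg_strict (K : fieldType) (G : porderZmodType) (v : K -> option G) x y :
  ordered_abelian_group G -> is_valuation v -> x != 0 -> y != 0 ->
  vg v x < vg v y -> x + y != 0 /\ vg v (x + y) = vg v x.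
Proof.
move=> hG hv nx ny lt.
have nxy : x + y != 0.
  apply/eqP => e; have : x = - y by rewrite -(addrK y x) e sub0r.
  by move=> ex; move: lt; rewrite ex vgN // ltxx.
split=> //; apply/le_anti/andP; split.
  have ex : x = (x + y) + - y by rewrite addrK.
  have ny' : - y != 0 by rewrite oppr_eq0.
  case: (vg_ultra hv nxy ny'); rewrite -ex // vgN // => h.
  by have := lt_le_trans lt h; rewrite ltxx.
case: (vg_ultra hv nx ny nxy) => // h.
exact: ltW (lt_le_trans lt h).
Qed.

Lemma inO_vg (K : fieldType) (G : porderZmodType) (v : K -> option G) x :
  is_valuation v -> x != 0 -> in_val_ring v x -> 0 <= vg v x.
Proof. by move=> hv nx; rewrite /in_val_ring (vSome hv nx). Qed.

Lemma vg_inO (K : fieldType) (G : porderZmodType) (v : K -> option G) x :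
  is_valuation v -> 0 <= vg v x -> in_val_ring v x.
Proof.
move=> hv h; case: (eqVneq x 0) => [->|nx]; first by rewrite /in_val_ring v0.
by rewrite /in_val_ring (vSome hv nx).
Qed.

Lemma ole_vg (K : fieldType) (G : porderZmodType) (v : K -> option G) x y :
  is_valuation v -> x != 0 -> y != 0 -> ole (v x) (v y) -> vg v x <= vg v y.
Proof. by move=> hv nx ny; rewrite (vSome hv nx) (vSome hv ny). Qed.

Definition Epol (K : fieldType) n (pi M s : K) : mpoly K 2 :=
  mpow (mvar K ord0) n ++
  mmul (mconst 2 pi) (mpow (mmul (mconst 2 M)
      (mmul (mpow (mvar K ord0) n) (mvar K ord_max) ++ mconst 2 (- s))) n).

Lemma Epol_eval (K : fieldType) n (pi M s : K) a :
  meval (Epol n pi M s) a =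
  a ord0 ^+ n + pi * (M * (a ord0 ^+ n * a ord_max - s)) ^+ n.
Proof.
by rewrite /Epol !(meval_cat, meval_mul, meval_pow, meval_const, meval_var).
Qed.

Lemma lemA (K : fieldType) (G : porderZmodType) (v : K -> option G) n :
  ordered_abelian_group G -> is_valuation v -> extremal v -> (1 < n)%N ->
  forall g : G, 0 < g -> ~ n_divisible n g -> maxmult G n.
Proof.
move=> hG hv hext n1 g g0 nd th th0.
have n0 : (0 < n)%N by apply: ltnW.
have [pi epi] := hv.2.2.2 g.
have [s es] := hv.2.2.2 th.
have npi : pi != 0 by apply/eqP => e; move: epi; rewrite e v0.
have ns : s != 0 by apply/eqP => e; move: es; rewrite e v0.
have vpi : vg v pi = g by rewrite /vg epi.
have vs : vg v s = th by rewrite /vg es.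
pose M := (s * pi)^-1.
have nM : M != 0 by rewrite invr_neq0 // mulf_neq0.
have vM : vg v M = - (th + g) by rewrite vgV ?mulf_neq0 // vgM // vpi vs.
pose E x y := x ^+ n + pi * (M * (x ^+ n * y - s)) ^+ n.
have vB : forall P, P != 0 -> vg v P = th ->
    pi * (M * P) ^+ n != 0 /\ vg v (pi * (M * P) ^+ n) = g - g *+ n.
  move=> P nP vP; have nMP : M * P != 0 by rewrite mulf_neq0.
  split; first by rewrite mulf_neq0 // expf_neq0.
  rewrite vgM ?expf_neq0 // vgX // vgM // vM vP vpi.
  by rewrite opprD addrAC addNr add0r mulNrn.
have Bneg : g - g *+ n < 0.
  case: n n1 {n0 vB E} nd => // k k1 _; rewrite mulrS opprD addrA subrr add0r.
  have := g_opplt hG (g_mulrn_gt0 hG g0 k1); by rewrite oppr0.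
have K3 : forall x y, in_val_ring v y -> (x = 0 \/ (x != 0 /\ th < vg v x *+ n)) ->
    E x y != 0 /\ vg v (E x y) < 0.
  move=> x y hy [->|[nx hx]].
    rewrite /E expr0n /= (gtn_eqF n0) mul0r add0r sub0r.
    have nsn : - s != 0 by rewrite oppr_eq0.
    have vsn : vg v (- s) = th by rewrite vgN.
    by have [nB ->] := vB (- s) nsn vsn.
  have nA : x ^+ n != 0 by rewrite expf_neq0.
  have vA : vg v (x ^+ n) = vg v x *+ n by rewrite vgX.
  have [nP vP] : x ^+ n * y - s != 0 /\ vg v (x ^+ n * y - s) = th.
    case: (eqVneq y 0) => [->|ny].
      by rewrite mulr0 sub0r oppr_eq0 ns vgN.
    have nxy : x ^+ n * y != 0 by rewrite mulf_neq0.
    have hlt : vg v (- s) < vg v (x ^+ n * y).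
      rewrite vgN // vs vgM // vA; apply: lt_le_trans hx _.
      rewrite -[X in X <= _]addr0; apply: g_addl => //; exact: inO_vg.
    have nsn : - s != 0 by rewrite oppr_eq0.
    have [h1 h2] := vg_strict hG hv nsn nxy hlt.
    by rewrite addrC; split=> //; rewrite h2 vgN.
  have [nB vB'] := vB _ nP vP.
  have hlt : vg v (pi * (M * (x ^+ n * y - s)) ^+ n) < vg v (x ^+ n).
    rewrite vB' vA; apply: lt_trans Bneg _.
    apply: le_lt_trans th0 hx.
  have [h1 h2] := vg_strict hG hv nB nA hlt.
  by rewrite /E addrC; split=> //; rewrite h2 vB'.
have K12 : forall x y, x != 0 -> E x y != 0 /\ vg v (E x y) <= vg v x *+ n.
  move=> x y nx; rewrite /E.
  have nA : x ^+ n != 0 by rewrite expf_neq0.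
  have vA : vg v (x ^+ n) = vg v x *+ n by rewrite vgX.
  case: (eqVneq (x ^+ n * y - s) 0) => [->|nP].
    by rewrite mulr0 expr0n (gtn_eqF n0) mulr0 addr0 vA.
  have nMP : M * (x ^+ n * y - s) != 0 by rewrite mulf_neq0.
  have nB : pi * (M * (x ^+ n * y - s)) ^+ n != 0 by rewrite mulf_neq0 // expf_neq0.
  have vB' : vg v (pi * (M * (x ^+ n * y - s)) ^+ n) =
      g + vg v (M * (x ^+ n * y - s)) *+ n by rewrite vgM ?expf_neq0 // vgX // vpi.
  case: (g_lt_total hG (vg v (x ^+ n)) (vg v (pi * (M * (x ^+ n * y - s)) ^+ n)))
    => [hlt|[heq|hgt]].
  - have [h1 h2] := vg_strict hG hv nA nB hlt.
    by split=> //; rewrite h2 vA.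
  - exfalso; apply: nd; exists (vg v x - vg v (M * (x ^+ n * y - s))).
    move: heq; rewrite vA vB' mulrnBl => ->; by rewrite addrK.
  - have [h1 h2] := vg_strict hG hv nB nA hgt.
    by rewrite addrC; split=> //; rewrite h2 -vA; apply: ltW.
have [a [ha hmax]] := hext 2%N isT (Epol n pi M s).
pose b (x y : K) : 'I_2 -> K := fun i => if i == ord0 then x else y.
have b0 : forall x y, b x y ord0 = x by [].
have b1 : forall x y, b x y ord_max = y by [].
have hb : forall x y, in_val_ring v x -> in_val_ring v y -> forall i, in_val_ring v (b x y i).
  by move=> x y hx hy i; rewrite /b; case: (i == ord0).
have Ea : meval (Epol n pi M s) a = E (a ord0) (a ord_max) by rewrite Epol_eval.
have Eb : forall x y, meval (Epol n pi M s) (b x y) = E x y by move=> x y; rewrite Epol_eval.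
have nEa : E (a ord0) (a ord_max) != 0.
  case: (eqVneq (a ord0) 0) => [e|nx]; last by case: (K12 _ (a ord_max) nx).
  by case: (K3 (a ord0) (a ord_max) (ha ord_max) (or_introl e)).
have Ege0 : 0 <= vg v (E (a ord0) (a ord_max)).
  have O1 : in_val_ring v 1 by apply: vg_inO => //; rewrite vg1.
  have Os : in_val_ring v s by apply: vg_inO => //; rewrite vs.
  have := hmax _ (hb _ _ O1 Os); rewrite Eb Ea.
  have -> : E 1 s = 1.
    by rewrite /E expr1n mul1r subrr mulr0 expr0n (gtn_eqF n0) mulr0 addr0.
  move=> h; have := ole_vg hv (oner_neq0 K) nEa h; by rewrite vg1.
have [na0 ha0] : a ord0 != 0 /\ vg v (a ord0) *+ n <= th.
  apply: NNPP => hn.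
  have hc : a ord0 = 0 \/ (a ord0 != 0 /\ th < vg v (a ord0) *+ n).
    case: (eqVneq (a ord0) 0) => [e|nx]; first by left.
    right; split=> //; apply: (g_nle hG) => h; apply: hn; by split.
  have [_ hneg] := K3 _ _ (ha ord_max) hc.
  by have := le_lt_trans Ege0 hneg; rewrite ltxx.
exists (vg v (a ord0)); split; first exact: inO_vg (ha ord0).
split=> // al al0 alth.
have [x ex] := hv.2.2.2 al.
have nx : x != 0 by apply/eqP => e; move: ex; rewrite e v0.
have vx : vg v x = al by rewrite /vg ex.
have nxn : x ^+ n != 0 by rewrite expf_neq0.
pose y := s / x ^+ n.
have Ox : in_val_ring v x by apply: vg_inO => //; rewrite vx.
have Oy : in_val_ring v y.
  apply: vg_inO => //; rewrite /y vgM ?invr_neq0 // vgV // vgX // vs vx.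
  by apply/(g_subge0 hG).
have Exy : E x y = x ^+ n.
  rewrite /E /y [x ^+ n * _]mulrC divfK // subrr mulr0 expr0n (gtn_eqF n0) mulr0 addr0.
  done.
have := hmax _ (hb _ _ Ox Oy); rewrite Eb Ea Exy => h.
have := ole_vg hv nxn nEa h; rewrite vgX // vx => h1.
apply: le_trans h1 _.
by case: (K12 _ (a ord_max) na0).
Qed.

Lemma pos_nondiv (G : porderZmodType) (hG : ordered_abelian_group G) n (g : G) :
  ~ n_divisible n g -> exists g' : G, 0 < g' /\ ~ n_divisible n g'.
Proof.
move=> ng; case: (g_lt_total hG g 0) => [glt|[ge|ggt]].
- exists (- g); split; first by have := g_opplt hG glt; rewrite oppr0.
  by move=> [y ey]; apply: ng; exists (- y); rewrite mulNrn -ey opprK.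
- by exfalso; apply: ng; exists 0; rewrite ge mul0rn.
- by exists g.
Qed.

Theorem theorem3p6 (K : fieldType) (G : porderZmodType) (v : K -> option G) :
  ordered_abelian_group G -> is_valuation v -> extremal v ->
  divisible_group G \/ Z_group G.
Proof.
move=> hG hv hext; apply: (grp_main hG) => n n0.
case: (classic (forall g : G, n_divisible n g)) => hall; first by left.
right.
have [g ng] : exists g : G, ~ n_divisible n g.
  by apply: NNPP => hn; apply: hall => g; apply: NNPP => hg; apply: hn; exists g.
have n1 : (1 < n)%N.
  case: (ltnP 1 n) => // hn1.
  have en : n = 1%N by apply/eqP; rewrite eqn_leq hn1 n0.
  by exfalso; apply: ng; exists g; rewrite en mulr1n.
have [g' [g'0 ng']] := pos_nondiv hG ng.
exact: (lemA hG hv hext n1 (g := g') g'0 ng').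
Qed.
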